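(* Let $n\ge2$, $h\in(0,1]$, and for $0\le p\le2n$ let $\mathcal M_p$ be the set of minimizers of $H$ on $\mathcal C(p)$. (a) Suppose $0\le\epsilon\le1$. Let $p^*_1=\frac n2$ if $n$ is even, $p^*_1=\frac{n+1}2$ if $n$ is odd and $h\le\epsilon$, $p^*_1=\frac{n-1}2$ if $n$ is odd and $\epsilon<h$. Then the maximum of $H$ over $\bigcup_{0\le p\le2n}\mathcal M_p$ is attained by the configurations in $C(p^*_1,0,0)\cup C(0,p^*_1,0)$, and $\Gamma_m\ge\Gamma^1_m$, where $\Gamma^1_m=\frac{n^2}2+n(\epsilon-h)$ if $n$ is even, $\Gamma^1_m=\frac{n^2-1}2+(n+1)(\epsilon-h)$ if $n$ is odd and $h\le\epsilon$, $\Gamma^1_m=\frac{n^2-1}2+(n-1)(\epsilon-h)$ if $n$ is odd and $\epsilon<h$. (b) Suppose $0<-\epsilon<h$. Let $p^*_2=\frac{3n}2$ if $n$ is even and $p^*_2=\frac{3n-1}2$ if $n$ is odd. Then the maximum of $H$ over $\bigcup_{n\le p\le2n}\mathcal M_p$ is attained by the configurations in $C(n,p^*_2-n,p^*_2-n)\cup C(p^*_2-n,n,p^*_2-n)$, and $\Gamma_m\ge\Gamma^2_m$, where $\Gamma^2_m=\frac{n^2}2-n(\epsilon+h)$ if $n$ is even and $\Gamma^2_m=\frac{n^2-1}2-(n-1)(\epsilon+h)$ if $n$ is odd.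
   Context: Setup. The graph $\mathcal G(2,n)$ has vertex set $V=V^{(1)}\cup V^{(2)}$ with $V^{(1)}=\{1,\dots,n\}$, $V^{(2)}=\{n+1,\dots,2n\}$; its edge set is $E=E_{\mathrm{int}}\cup E_{\mathrm{cross}}$, where $E_{\mathrm{int}}$ consists of all pairs of distinct vertices in the same $V^{(k)}$ and $E_{\mathrm{cross}}=\{\{i,i+n\}:1\le i\le n\}$. The configuration space is $\mathcal X=\{-1,+1\}^V$ and $H(\sigma)=-\sum_{\{i,j\}\in E_{\mathrm{int}}}\sigma_i\sigma_j-\epsilon\sum_{\{i,j\}\in E_{\mathrm{cross}}}\sigma_i\sigma_j-h\sum_{i\in V}\sigma_i$, $\epsilon\in[-1,1]$. $C(p_1,p_2,a)$ is the set of configurations with exactly $p_1$ vertices of spin $+1$ in $V^{(1)}$, exactly $p_2$ vertices of spin $+1$ in $V^{(2)}$, and exactly $a$ cross-edges both of whose endpoints have spin $+1$. $\mathcal C(p)$ is the set of configurations with exactly $p$ vertices of spin $+1$. Energy landscape. Paths are sequences of configurations in which consecutive ones differ at exactly one vertex; $\Phi(\eta,\eta')=\min_{\omega:\eta\to\eta'}\max_{\zeta\in\omega}H(\zeta)$, $\Phi(\eta,A)=\min_{\eta'\in A}\Phi(\eta,\eta')$. The stability level is $V_\zeta=\Phi(\zeta,\{\eta:H(\eta)<H(\zeta)\})-H(\zeta)$ ($\infty$ if that set is empty). $\mathcal X_s$ is the set of global minimizers of $H$, and $\Gamma_m=\max_{\zeta\in\mathcal X\setminus\mathcal X_s}V_\zeta$.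 *)

(* Defs.v *)
From HB Require Import structures.
From mathcomp Require Import all_boot all_order all_algebra.
From mathcomp Require Import all_classical all_reals ereal.
Set Implicit Arguments. Unset Strict Implicit. Unset Printing Implicit Defensive.
Import Order.TTheory GRing.Theory Num.Theory.
Local Open Scope ring_scope.
Local Open Scope classical_set_scope.

(* Vertices of G(2,n): 'I_(n+n); vertex v (0-indexed) lies in V^(1) iff v < n.
   Paper vertex i (1<=i<=n) is lshift n (i-1); paper vertex i+n is rshift n (i-1). *)
Definition vtx (n : nat) := 'I_(n + n).
Definition in_V1 (n : nat) (v : vtx n) : bool := (v < n)%N.

Definition config (n : nat) := {ffun vtx n -> bool}.

Definition spin (R : realType) (b : bool) : R := if b then 1 else -1.

Definition Hint (R : realType) (n : nat) (s : config n) : R :=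
  \sum_(u : vtx n) \sum_(v : vtx n | (u < v)%N && (in_V1 u == in_V1 v))
     spin R (s u) * spin R (s v).

Definition Hcross (R : realType) (n : nat) (s : config n) : R :=
  \sum_(i < n) spin R (s (lshift n i)) * spin R (s (rshift n i)).

Definition Hfield (R : realType) (n : nat) (s : config n) : R :=
  \sum_(v : vtx n) spin R (s v).

Definition H (R : realType) (n : nat) (eps h : R) (s : config n) : R :=
  - Hint R s - eps * Hcross R s - h * Hfield R s.

Definition Cset (n : nat) (p1 p2 a : nat) : {set config n} :=
  [set s : config n |
     [&& #|[set i : 'I_n | s (lshift n i)]| == p1,
         #|[set i : 'I_n | s (rshift n i)]| == p2 &
         #|[set i : 'I_n | s (lshift n i) && s (rshift n i)]| == a]].

Definition Cp (n : nat) (p : nat) : {set config n} :=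
  [set s : config n | #|[set v | s v]| == p].

Definition Mp (R : realType) (n : nat) (eps h : R) (p : nat) : {set config n} :=
  [set s in Cp n p | [forall t in Cp n p, H eps h s <= H eps h t]].

Definition adj (n : nat) (s t : config n) : bool :=
  #|[set v | s v != t v]| == 1%N.

Definition is_path (n : nat) (eta eta' : config n) (w : seq (config n)) : bool :=
  path (@adj n) eta w && (last eta w == eta').

Definition path_max (R : realType) (n : nat) (eps h : R) (eta : config n)
    (w : seq (config n)) : R :=
  \big[Num.max/H eps h eta]_(z <- w) H eps h z.

Definition Phi (R : realType) (n : nat) (eps h : R) (eta eta' : config n) : \bar R :=
  ereal_inf [set (path_max eps h eta w)%:E | w in [set w | is_path eta eta' w]].

(* Phi(eta,A) = min over eta' in A (= +oo if A empty) *)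
Definition PhiA (R : realType) (n : nat) (eps h : R) (eta : config n)
    (A : set (config n)) : \bar R :=
  ereal_inf [set Phi eps h eta e | e in A].

(* stability level V_zeta (= +oo when no lower configuration exists) *)
Definition stab (R : realType) (n : nat) (eps h : R) (z : config n) : \bar R :=
  (PhiA eps h z [set e | (H eps h e < H eps h z)%R] - (H eps h z)%:E)%E.

Definition Xs (R : realType) (n : nat) (eps h : R) : set (config n) :=
  [set s : config n | forall t : config n, (H eps h s <= H eps h t)%R].

Definition Gamma_m (R : realType) (n : nat) (eps h : R) : \bar R :=
  ereal_sup [set stab eps h z | z in ~` (@Xs R n eps h)].

(* Main.v *)
Require Import Defs.
From HB Require Import structures.
From mathcomp Require Import all_boot all_order all_algebra.
From mathcomp Require Import all_classical all_reals ereal.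
Import Order.TTheory GRing.Theory Num.Theory.
From mathcomp Require Import ring lra zify.
Local Open Scope ring_scope.
Set Implicit Arguments. Unset Strict Implicit. Unset Printing Implicit Defensive.


Definition xL n (s : config n) := #|[set i : 'I_n | s (lshift n i)]|.
Definition xR n (s : config n) := #|[set i : 'I_n | s (rshift n i)]|.
Definition xA n (s : config n) := #|[set i : 'I_n | s (lshift n i) && s (rshift n i)]|.
Definition cnt n (s : config n) := #|[set v : vtx n | s v]|.
Definition F (R : realType) (n : nat) (eps h X Y A : R) : R :=
  - (((2*X - n%:R)^+2 + (2*Y - n%:R)^+2 - 2 * n%:R)/2)
  - eps * (n%:R - 2*X - 2*Y + 4*A) - h * (2*X + 2*Y - 2*n%:R).

Lemma card_sumR (R : realType) (T : finType) (P : pred T) :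
  (#|[set i | P i]|%:R : R) = \sum_i (P i)%:R.
Proof.
rewrite (eq_bigr (fun i => if P i then 1 else 0)); last by move=> i _; case: (P i).
rewrite -big_mkcond /= sumr_const; congr (_%:R).
by apply: eq_card => i; rewrite inE.
Qed.

Lemma spinE (R : realType) b : spin R b = 2 * (b : nat)%:R - 1.
Proof. by case: b => /=; rewrite /spin; lra. Qed.

Lemma spinM (R : realType) b c : spin R b * spin R c =
  1 - 2 * (b : nat)%:R - 2 * (c : nat)%:R + 4 * ((b && c) : nat)%:R.
Proof. by case: b; case: c => /=; rewrite /spin; lra. Qed.

Lemma sum_spin (R : realType) n (f : 'I_n -> bool) :
  \sum_i spin R (f i) = 2 * #|[set i | f i]|%:R - n%:R.
Proof.
rewrite card_sumR (eq_bigr (fun i => 2 * (f i : nat)%:R - 1)); last by move=> i _; exact: spinE.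
by rewrite sumrB -mulr_sumr sumr_const card_ord.
Qed.

Lemma Hfield_E (R : realType) n (s : config n) :
  Hfield R s = 2 * (xL s)%:R + 2 * (xR s)%:R - 2 * n%:R.
Proof.
rewrite /Hfield /vtx big_split_ord /= !sum_spin /xL /xR; lra.
Qed.

Lemma Hcross_E (R : realType) n (s : config n) :
  Hcross R s = n%:R - 2 * (xL s)%:R - 2 * (xR s)%:R + 4 * (xA s)%:R.
Proof.
rewrite /Hcross (eq_bigr _ (fun i _ => spinM _ _ _)).
rewrite big_split /= !sumrB -!mulr_sumr sumr_const card_ord /xL /xR /xA !card_sumR.
lra.
Qed.


Lemma inV1_l n (i : 'I_n) : in_V1 (lshift n i) = true.
Proof. by rewrite /in_V1 /= ltn_ord. Qed.
Lemma inV1_r n (i : 'I_n) : in_V1 (rshift n i) = false.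
Proof. by rewrite /in_V1 /= ltnNge leq_addr. Qed.

Lemma pair_sym (R : realType) n (G : vtx n -> vtx n -> R) :
  (forall u v, G u v = G v u) ->
  \sum_(u : vtx n) \sum_(v : vtx n | in_V1 u == in_V1 v) G u v =
  2 * (\sum_(u : vtx n) \sum_(v : vtx n | (u < v)%N && (in_V1 u == in_V1 v)) G u v)
  + \sum_(u : vtx n) G u u.
Proof.
move=> Gs.
have step u : \sum_(v : vtx n | in_V1 u == in_V1 v) G u v =
   \sum_(v : vtx n | (u < v)%N && (in_V1 u == in_V1 v)) G u v +
   \sum_(v : vtx n | (v < u)%N && (in_V1 u == in_V1 v)) G u v + G u u.
  rewrite (bigD1 u) ?eqxx //= addrC; congr (_ + _).
  have ne v : (v != u) = (u < v)%N || (v < u)%N.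
    by rewrite -(inj_eq val_inj) /= neq_ltn orbC.
  rewrite (bigID (fun v : vtx n => (u < v)%N)) /=; congr (_ + _); apply: eq_bigl => v;
    rewrite ne; case: ltngtP => //= H; rewrite ?andbT ?andbF ?andbC //.
rewrite (eq_bigr _ (fun u _ => step u)) !big_split /= mulr2n mulrDl mul1r.
congr (_ + _ + _).
transitivity (\sum_(u : vtx n) \sum_(v : vtx n)
   (if (v < u)%N && (in_V1 u == in_V1 v) then G u v else 0)).
  by apply: eq_bigr => u _; rewrite big_mkcond.
rewrite exchange_big /=; apply: eq_bigr => u _; rewrite [RHS]big_mkcond /=; apply: eq_bigr => v _.
by rewrite Gs eq_sym.
Qed.

Lemma Hint_E (R : realType) n (s : config n) :
  Hint R s = (((2 * (xL s)%:R - n%:R)^+2 + (2 * (xR s)%:R - n%:R)^+2) - 2 * n%:R) / 2.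
Proof.
have PS := @pair_sym R n (fun u v => spin R (s u) * spin R (s v)) (fun u v => mulrC _ _).
have D : \sum_(u : vtx n) spin R (s u) * spin R (s u) = 2 * n%:R.
  rewrite (eq_bigr (fun _ => 1)); last by move=> u _; case: (s u); rewrite /spin; lra.
  by rewrite sumr_const card_ord natrD; lra.
have inner u : \sum_(v : vtx n | in_V1 u == in_V1 v) spin R (s v) =
  if in_V1 u then \sum_(i < n) spin R (s (lshift n i)) else \sum_(i < n) spin R (s (rshift n i)).
  rewrite /vtx big_split_ord /=.
  case: (in_V1 u).
    rewrite (eq_bigl xpredT); last by move=> i; rewrite inV1_l.
    rewrite [X in _ + X]big_pred0; [by rewrite addr0 | by move=> i; rewrite inV1_r].
  rewrite [X in X + _]big_pred0; last by move=> i; rewrite inV1_l.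
  rewrite add0r.
  by apply: eq_bigl => i; rewrite inV1_r.
have T1 : \sum_(u : vtx n) \sum_(v : vtx n | in_V1 u == in_V1 v) spin R (s u) * spin R (s v)
   = (2 * (xL s)%:R - n%:R)^+2 + (2 * (xR s)%:R - n%:R)^+2.
  rewrite (eq_bigr (fun u => spin R (s u) * (if in_V1 u then \sum_(i < n) spin R (s (lshift n i)) else \sum_(i < n) spin R (s (rshift n i))))); last first.
    by move=> u _; rewrite -inner mulr_sumr.
  rewrite /vtx big_split_ord /=.
  rewrite (eq_bigr (fun i => spin R (s (lshift n i)) * \sum_(i < n) spin R (s (lshift n i)))); last by move=> i _; rewrite inV1_l.
  rewrite [X in _ + X](eq_bigr (fun i => spin R (s (rshift n i)) * \sum_(i < n) spin R (s (rshift n i)))); last by move=> i _; rewrite inV1_r.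
  by rewrite -!mulr_suml !sum_spin /xL /xR !expr2.
rewrite /Hint; move: PS; rewrite T1 D => ->; by field.
Qed.


Lemma cardcE (T : finType) (P : pred T) : #|[set x | P x]%classic| = #|[set x | P x]|.
Proof. apply: eq_card => x; rewrite inE; apply/idP/idP => H.
  by move: H; rewrite in_setE.
by rewrite in_setE.
Qed.

Lemma H_E (R : realType) n (eps h : R) (s : config n) :
  H eps h s = F n eps h (xL s)%:R (xR s)%:R (xA s)%:R.
Proof. by rewrite /H Hint_E Hcross_E Hfield_E /F. Qed.

Lemma card_nat (T : finType) (P : pred T) : #|[set i | P i]| = (\sum_i (P i : nat))%N.
Proof.
have := sum_nat_cond_const P 1; rewrite muln1 => <-.
by rewrite big_mkcond /=; apply: eq_bigr => i _; case: (P i).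
Qed.

Lemma cnt_E n (s : config n) : cnt s = (xL s + xR s)%N.
Proof.
rewrite /cnt /xL /xR !card_nat /vtx big_split_ord /=.
by congr (_ + _)%N.
Qed.

Lemma xA_xL n (s : config n) : (xA s <= xL s)%N.
Proof. by apply/subset_leq_card/fintype.subsetP => i; rewrite !inE => /andP[]. Qed.
Lemma xA_xR n (s : config n) : (xA s <= xR s)%N.
Proof. by apply/subset_leq_card/fintype.subsetP => i; rewrite !inE => /andP[]. Qed.
Lemma xL_n n (s : config n) : (xL s <= n)%N.
Proof. by rewrite -[X in (_ <= X)%N](card_ord n); apply: max_card. Qed.
Lemma xR_n n (s : config n) : (xR s <= n)%N.
Proof. by rewrite -[X in (_ <= X)%N](card_ord n); apply: max_card. Qed.
Lemma xLR n (s : config n) : (xL s + xR s <= n + xA s)%N.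
Proof.
rewrite /xL /xR -cardsUI.
have -> : [set i | s (lshift n i)] :&: [set i | s (rshift n i)] =
          [set i | s (lshift n i) && s (rshift n i)] by apply/setP => i; rewrite !inE.
rewrite leq_add2r -[X in (_ <= X)%N](card_ord n); apply: max_card.
Qed.

Definition fstc n (p : nat) : config n := [ffun v : vtx n => (v < p)%N].

Lemma sum_range n c p : (\sum_(i < n) ((c + i < p)%N : nat))%N = minn (p - c) n.
Proof.
rewrite -(big_mkord xpredT (fun i => ((c + i < p)%N : nat))).
elim: n => [|n IH]; first by rewrite big_geq //; lia.
rewrite big_nat_recr //= IH; case: (ltnP (c + n) p) => H /=; lia.
Qed.

Lemma fst_xL n p : xL (fstc n p) = minn p n.
Proof.
rewrite /xL card_nat -[p in RHS]subn0 -(sum_range n 0 p); apply: eq_bigr => i _.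
by rewrite ffunE.
Qed.
Lemma fst_xR n p : xR (fstc n p) = minn (p - n) n.
Proof.
rewrite /xR card_nat -(sum_range n n p); apply: eq_bigr => i _.
by rewrite ffunE.
Qed.
Lemma fst_xA n p : xA (fstc n p) = minn (p - n) n.
Proof.
rewrite /xA card_nat -(sum_range n n p); apply: eq_bigr => i _.
rewrite !ffunE /=; congr (nat_of_bool _).
by apply/idP/idP => [/andP[]//|H]; rewrite H andbT; apply: leq_ltn_trans H; rewrite leq_addl.
Qed.


Lemma adj_cnt n (s t : config n) : adj s t -> (cnt t <= (cnt s).+1)%N.
Proof.
rewrite /adj cardcE => /eqP D.
have sub : [set v | t v] \subset [set v | s v] :|: [set v | s v != t v].
  apply/fintype.subsetP => v; rewrite !inE => tv; rewrite tv; by case: (s v).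
apply: (leq_trans (subset_leq_card sub)); apply: (leq_trans (leq_card_setU _ _).1).
by rewrite D addn1.
Qed.

Lemma ivt n (w : seq (config n)) (eta : config n) p :
  path (@adj n) eta w -> (cnt eta <= p <= cnt (last eta w))%N ->
  exists2 z, z \in eta :: w & cnt z = p.
Proof.
elim: w eta => [|t w IH] eta /=.
  move=> _ H; exists eta; first exact: mem_head.
  by apply/eqP; rewrite eqn_leq.
move=> /andP[a pa] /andP[H1 H2].
case: (ltnP (cnt eta) p) => H3; last first.
  exists eta; first exact: mem_head.
  by apply/eqP; rewrite eqn_leq H3 H1.
have := adj_cnt a => H4.
have [z zin zc] := IH t pa (introT andP (conj (leq_trans H4 H3) H2)).
by exists z => //; rewrite inE zin orbT.
Qed.

Lemma path_max_ge (R : realType) n (eps h : R) (eta : config n) w z :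
  z \in eta :: w -> H eps h z <= path_max eps h eta w.
Proof.
rewrite /path_max; elim: w => [|t w IH].
  by rewrite inE big_nil => /eqP ->.
rewrite big_cons le_max; rewrite !inE => /orP[/eqP E|/orP[/eqP E|zw]].
- by rewrite IH ?orbT // inE E eqxx.
- by rewrite E lexx.
- by rewrite IH ?orbT // inE zw orbT.
Qed.

Lemma Phi_ge (R : realType) n (eps h : R) (eta e : config n) p (M : R) :
  (cnt eta <= p <= cnt e)%N -> (forall z : config n, cnt z = p -> M <= H eps h z) ->
  (M%:E <= Phi eps h eta e)%E.
Proof.
move=> Hp Hz; apply/ereal_infP => y [w /= /andP[pw /eqP le] <-].
rewrite lee_fin.
have Hp2 : (cnt eta <= p <= cnt (last eta w))%N by rewrite le.
have [z zin zc] := ivt pw Hp2.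
exact: le_trans (Hz _ zc) (path_max_ge _ _ zin).
Qed.

Lemma stab_ge (R : realType) n (eps h : R) (eta : config n) p (G : R) :
  (forall e : config n, H eps h e < H eps h eta -> (cnt eta <= p <= cnt e)%N) ->
  (forall z : config n, cnt z = p -> H eps h eta + G <= H eps h z) ->
  (G%:E <= stab eps h eta)%E.
Proof.
move=> He Hz.
have : ((H eps h eta + G)%:E <= PhiA eps h eta [set e | (H eps h e < H eps h eta)%R])%E.
  apply/ereal_infP => y [e /= lt <-]; exact: Phi_ge (He _ lt) Hz.
rewrite /stab; case: (PhiA _ _ _ _) => [r||] //=.
  by rewrite !lee_fin => H1; lra.
by move=> _; rewrite leey.
Qed.

Lemma Gamma_ge (R : realType) n (eps h : R) (eta e : config n) (G : R) :
  H eps h e < H eps h eta -> (G%:E <= stab eps h eta)%E -> (G%:E <= @Gamma_m R n eps h)%E.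
Proof.
move=> lt Hs; apply: (le_trans Hs); apply: ereal_sup_ubound; exists eta => //.
move=> /(_ e); rewrite leNgt lt //.
Qed.

Lemma half_eq k m (b : bool) : k = (b + m.*2)%N -> k./2 = m.
Proof. by move=> ->; apply: half_bit_double. Qed.
Lemma halves n : exists m, [/\ n = (odd n + m.*2)%N, n./2 = m,
   n.+1./2 = (m + odd n)%N & (3*n)./2 = (n + m)%N].
Proof.
exists n./2; have E := esym (odd_double_half n).
split => //.
- case O: (odd n).
    apply: (@half_eq _ _ false); move: E; rewrite O -!addnn; lia.
  apply: (@half_eq _ _ true); move: E; rewrite O -!addnn; lia.
- case O: (odd n).
    apply: (@half_eq _ _ true); move: E; rewrite O -!addnn; lia.
  apply: (@half_eq _ _ false); move: E; rewrite O -!addnn; lia.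
Qed.


Lemma L1 (R : realType) n (eps h X Y A : R) :
  eps <= 1 -> 0 <= A -> eps * A <= X * Y ->
  F n eps h (X + Y) 0 0 <= F n eps h X Y A.
Proof.
move=> e1 A0 XY; have : eps * A <= A by nra.
rewrite /F; nra.
Qed.

Lemma L2 (R : realType) n (eps h X Y A : R) :
  eps <= 0 -> X + Y - n%:R <= A -> X <= n%:R -> Y <= n%:R ->
  F n eps h n%:R (X + Y - n%:R) (X + Y - n%:R) <= F n eps h X Y A.
Proof.
move=> e0 H1 H2 H3.
have P1 : 0 <= (n%:R - X) * (n%:R - Y) by apply: mulr_ge0; lra.
have P2 : 0 <= eps * (X + Y - n%:R - A) by apply: mulr_le0; lra.
rewrite /F; nra.
Qed.

Lemma sign_int (R : realType) (P P1 N d : R) :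
  (P <= P1 - 1 \/ P = P1 \/ P1 + 1 <= P) -> 0 < 1 + (2 * P1 - N) - d ->
  (2 * P1 - N) - 1 - d <= 0 -> 0 <= (P - P1) * (P + P1 - N - d).
Proof.
move=> [H|[H|H]] c1 c2.
- apply: mulr_le0; lra.
- by rewrite H subrr mul0r.
- apply: mulr_ge0; lra.
Qed.

Lemma tri (R : realType) (p q : nat) :
  ((p%:R : R) <= q%:R - 1 \/ (p%:R : R) = q%:R \/ (q%:R : R) + 1 <= p%:R).
Proof.
case: (ltngtP p q) => H.
- left; have : (p.+1%:R : R) <= q%:R by rewrite ler_nat.
  rewrite -natr1; lra.
- right; right; have : (q.+1%:R : R) <= p%:R by rewrite ler_nat.
  rewrite -natr1; lra.
- by right; left; rewrite H.
Qed.

Lemma g_conc (R : realType) n (eps h P P1 : R) :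
  0 <= (P - P1) * (P + P1 - n%:R - (eps - h)) ->
  F n eps h P 0 0 <= F n eps h P1 0 0.
Proof. rewrite /F => H; nra. Qed.

Lemma k_conc (R : realType) n (eps h Q Q1 : R) :
  0 <= (Q - Q1) * (Q + Q1 - n%:R - (- (eps + h))) ->
  F n eps h n%:R Q Q <= F n eps h n%:R Q1 Q1.
Proof. rewrite /F => H; nra. Qed.


Lemma Cset_E n (z : config n) a b c : z \in Cset n a b c -> [/\ xL z = a, xR z = b & xA z = c].
Proof. by rewrite /Cset inE !cardcE => /and3P[/eqP H1 /eqP H2 /eqP H3]; split. Qed.

Lemma Cp_E n (z : config n) p : (z \in Cp n p) = (cnt z == p).
Proof. by rewrite /Cp inE cardcE. Qed.

Lemma Mp_intro (R : realType) n (eps h : R) p (z : config n) :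
  cnt z = p -> (forall t : config n, cnt t = p -> H eps h z <= H eps h t) -> z \in @Mp R n eps h p.
Proof.
move=> cz Ht; rewrite /Mp inE Cp_E cz eqxx /=; apply/forallP => t; apply/implyP.
by rewrite Cp_E => /eqP; apply: Ht.
Qed.

Lemma Mp_le (R : realType) n (eps h : R) p (e t : config n) :
  e \in @Mp R n eps h p -> cnt t = p -> H eps h e <= H eps h t.
Proof.
rewrite /Mp inE => /andP[_ /forallP Ht] ct; have := Ht t; rewrite Cp_E ct eqxx.
by move/implyP; apply.
Qed.

Lemma fst_cnt n p : (p <= n + n)%N -> cnt (fstc n p) = p.
Proof. by move=> Hp; rewrite cnt_E fst_xL fst_xR; lia. Qed.

Lemma H_lowerL (R : realType) n (eps h : R) (t : config n) : eps <= 1 ->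
  F n eps h (cnt t)%:R 0 0 <= H eps h t.
Proof.
move=> e1; rewrite H_E cnt_E natrD; apply: L1 => //.
have : (xA t <= xL t * xR t)%N by have := xA_xL t; have := xA_xR t; nia.
rewrite -(ler_nat R) natrM => H1.
have : 0 <= ((xA t)%:R : R) by [].
nra.
Qed.

Lemma H_lowerK (R : realType) n (eps h : R) (t : config n) : eps <= 0 ->
  F n eps h n%:R ((cnt t)%:R - n%:R) ((cnt t)%:R - n%:R) <= H eps h t.
Proof.
move=> e0; rewrite H_E cnt_E natrD; apply: L2 => //.
- have := xLR t; rewrite -(ler_nat R) !natrD; lra.
- by rewrite ler_nat xL_n.
- by rewrite ler_nat xR_n.
Qed.

Lemma H_fst (R : realType) n (eps h : R) p :
  H eps h (fstc n p) = F n eps h (minn p n)%:R (minn (p - n) n)%:R (minn (p - n) n)%:R.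
Proof. by rewrite H_E fst_xL fst_xR fst_xA. Qed.

Lemma H_fst0 (R : realType) n (eps h : R) : H eps h (fstc n 0) = F n eps h 0 0 0.
Proof.
have E1 : minn 0 n = 0%N by lia.
have E2 : minn (0 - n) n = 0%N by lia.
by rewrite H_fst ?sub0n ?min0n ?E1 ?E2.
Qed.

Lemma H_fstn (R : realType) n (eps h : R) : H eps h (fstc n n) = F n eps h n%:R 0 0.
Proof.
have E1 : minn n n = n by lia.
have E2 : minn (n - n) n = 0%N by lia.
by rewrite H_fst ?sub0n ?min0n ?E1 ?E2.
Qed.

Lemma H_fstnn (R : realType) n (eps h : R) :
  H eps h (fstc n (n + n)) = F n eps h n%:R n%:R n%:R.
Proof.
have E1 : minn (n + n) n = n by lia.
have E2 : minn (n + n - n) n = n by lia.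
by rewrite H_fst ?sub0n ?min0n ?E1 ?E2.
Qed.


Lemma partA (R : realType) (n : nat) (eps h : R) :
  (2 <= n)%N -> 0 < h -> h <= 1 -> -1 <= eps -> eps <= 1 -> 0 <= eps ->
    let p1 : nat := if odd n then (if h <= eps then n.+1./2 else n./2) else n./2 in
    let G1 : R :=
      if ~~ odd n then (n%:R ^+ 2) / 2 + n%:R * (eps - h)
      else if h <= eps then (n%:R ^+ 2 - 1) / 2 + n.+1%:R * (eps - h)
      else (n%:R ^+ 2 - 1) / 2 + n.-1%:R * (eps - h) in
    (forall z : config n, z \in Cset n p1 0 0 :|: Cset n 0 p1 0 ->
       (exists2 p : nat, (p <= n + n)%N & z \in @Mp R n eps h p) /\
       (forall (p : nat) (e : config n), (p <= n + n)%N -> e \in @Mp R n eps h p ->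
          H eps h e <= H eps h z)) /\
    ((G1%:E <= @Gamma_m R n eps h)%E).
Proof.
move=> n2 h0 h1 em1 e1 e0 p1 G1.
have [m [Hn Hh1 Hh2 _]] := halves n.
have NR : (n%:R : R) = (odd n : nat)%:R + 2 * m%:R.
  by rewrite {1}Hn natrD -addnn natrD; lra.
have Nm1 : (n.-1%:R : R) = n%:R - 1.
  by rewrite -{2}(prednK (ltnW n2)) -natr1 addrK.
have Np1 : (n.+1%:R : R) = n%:R + 1 by rewrite -natr1.
have [p1n c1 c2 GE] : [/\ (p1 < n)%N, 0 < 1 + (2 * p1%:R - n%:R) - (eps - h),
     (2 * p1%:R - n%:R) - 1 - (eps - h) <= 0 &
     F n eps h 0 0 0 + G1 = F n eps h p1%:R 0 0].
  rewrite /p1 /G1 Hh1 Hh2 Nm1 Np1 /F NR; move: Hn; case: (odd n) => /= Hn.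
    case: ifP => hle.
      split; first by rewrite -addnn in Hn; lia.
      + rewrite natrD; lra.
      + rewrite natrD; lra.
      + rewrite natrD; by field.
    have hlt : eps < h by rewrite ltNge; move: hle => ->.
    split; first by rewrite -addnn in Hn; lia.
    + lra.
    + lra.
    + by field.
  split; first by rewrite -addnn in Hn; lia.
  + lra.
  + lra.
  + by field.
have A1 : forall p : nat, F n eps h p%:R 0 0 <= F n eps h p1%:R 0 0.
  by move=> p; apply: g_conc; apply: sign_int (tri R p p1) c1 c2.
have A2 : forall q : nat, (q <= n)%N -> F n eps h n%:R q%:R q%:R <= F n eps h p1%:R 0 0.
  move=> q qn; have H1 := A1 (n - q)%N; rewrite natrB // in H1.
  have H2 : 0 <= h * q%:R by apply: mulr_ge0; [lra | exact: ler0n].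
  move: H1 H2; rewrite /F; nra.
have A3 : forall p : nat, (p < n)%N -> F n eps h 0 0 0 <= F n eps h p%:R 0 0.
  move=> p pn; have : (p.+1%:R : R) <= n%:R by rewrite ler_nat.
  rewrite -natr1 => pn'.
  have : 0 <= p%:R * (n%:R - p%:R + eps - h) by apply: mulr_ge0; [exact: ler0n | lra].
  rewrite /F; nra.
split.
  move=> z zin.
  have [Hz cz] : H eps h z = F n eps h p1%:R 0 0 /\ cnt z = p1.
    case/setUP: zin => /Cset_E[a b c]; rewrite H_E a b c cnt_E a b; split => //.
      by rewrite addn0.
    by rewrite /F; ring.
  split.
    exists p1; first by apply: leq_trans (ltnW p1n) _; rewrite leq_addr.
    apply: Mp_intro => // t ct; rewrite Hz; have := H_lowerL h t e1; by rewrite ct.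
  move=> p e pn eM; apply: (le_trans (Mp_le eM (fst_cnt pn))); rewrite H_fst Hz.
  case: (leqP p n) => pn'.
    rewrite (_ : minn (p - n) n = 0)%N; last by lia.
    exact: A1.
  rewrite (_ : minn (p - n) n = p - n)%N; last by lia.
  by apply: A2; lia.
apply: (@Gamma_ge R n eps h (fstc n 0) (fstc n (n + n))).
  rewrite H_fst0 H_fstnn.
  have n2' : (2%:R : R) <= n%:R by rewrite ler_nat.
  have : 0 < h * n%:R by apply: mulr_gt0; lra.
  rewrite /F; nra.
apply: (@stab_ge R n eps h (fstc n 0) p1).
  move=> e lt; rewrite fst_cnt // leq0n /=; rewrite leqNgt; apply/negP => ce.
  have := H_lowerL h e e1; have := A3 (cnt e) (ltn_trans ce p1n).
  move: lt; rewrite H_fst0; lra.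
move=> z cz; have := H_lowerL h z e1; rewrite cz H_fst0 GE; lra.
Qed.


Lemma partB (R : realType) (n : nat) (eps h : R) :
  (2 <= n)%N -> 0 < h -> h <= 1 -> -1 <= eps -> eps <= 1 ->
  0 < - eps -> - eps < h ->
    let p2 : nat := (3 * n)./2 in
    let G2 : R :=
      if ~~ odd n then (n%:R ^+ 2) / 2 - n%:R * (eps + h)
      else (n%:R ^+ 2 - 1) / 2 - n.-1%:R * (eps + h) in
    (forall z : config n,
       z \in Cset n n (p2 - n) (p2 - n) :|: Cset n (p2 - n) n (p2 - n) ->
       (exists2 p : nat, (n <= p <= n + n)%N & z \in @Mp R n eps h p) /\
       (forall (p : nat) (e : config n), (n <= p <= n + n)%N -> e \in @Mp R n eps h p ->
          H eps h e <= H eps h z)) /\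
    ((G2%:E <= @Gamma_m R n eps h)%E).
Proof.
move=> n2 h0 h1 em1 e1 e0 eh p2 G2.
have [m [Hn Hh1 _ Hh3]] := halves n.
have p2E : p2 = (n + m)%N by rewrite /p2 Hh3.
have mn : (m < n)%N by move: Hn; case: (odd n) => /=; rewrite -addnn; lia.
have NR : (n%:R : R) = (odd n : nat)%:R + 2 * m%:R.
  by rewrite {1}Hn natrD -addnn natrD; lra.
have Nm1 : (n.-1%:R : R) = n%:R - 1.
  by rewrite -{2}(prednK (ltnW n2)) -natr1 addrK.
have [d1 d2 GE] : [/\ 0 < 1 + (2 * m%:R - n%:R) - (- (eps + h)),
     (2 * m%:R - n%:R) - 1 - (- (eps + h)) <= 0 &
     F n eps h n%:R 0 0 + G2 = F n eps h n%:R m%:R m%:R].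
  rewrite /G2 Nm1 /F NR; move: Hn; case: (odd n) => /= Hn.
    split; [lra | lra | by field].
  split; [lra | lra | by field].
have B1 : forall q : nat, F n eps h n%:R q%:R q%:R <= F n eps h n%:R m%:R m%:R.
  by move=> q; apply: k_conc; apply: sign_int (tri R q m) d1 d2.
have B2 : forall p : nat, (p <= n)%N -> F n eps h n%:R 0 0 <= F n eps h p%:R 0 0.
  move=> p pn; have : (p%:R : R) <= n%:R by rewrite ler_nat.
  move=> pn'; have : 0 <= (n%:R - p%:R) * (p%:R - eps + h).
    by apply: mulr_ge0; [lra | have := ler0n R p; lra].
  rewrite /F; nra.
have B3 : forall q : nat, (q < m)%N -> F n eps h n%:R 0 0 <= F n eps h n%:R q%:R q%:R.
  move=> q qm; have : (q.+1%:R : R) <= n%:R by rewrite ler_nat; lia.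
  rewrite -natr1 => qn.
  have : 0 <= q%:R * (n%:R - q%:R - eps - h) by apply: mulr_ge0; [exact: ler0n | lra].
  rewrite /F; nra.
have KE : forall t : config n, cnt t = (n + m)%N -> F n eps h n%:R m%:R m%:R <= H eps h t.
  move=> t ct; have e0' : eps <= 0 by lra.
  have := H_lowerK h t e0'.
  by rewrite ct natrD addrC addKr.
have e0' : eps <= 0 by lra.
split.
  move=> z; rewrite p2E addKn => zin.
  have [Hz cz] : H eps h z = F n eps h n%:R m%:R m%:R /\ cnt z = (n + m)%N.
    case/setUP: zin => /Cset_E[a b c]; rewrite H_E a b c cnt_E a b.
      by split.
    split; [by rewrite /F; ring | by rewrite addnC].
  split.
    exists (n + m)%N; first by apply/andP; split; clear -mn; lia.
    by apply: Mp_intro => // t ct; rewrite Hz; apply: KE.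
  move=> p e /andP[pn1 pn2] eM; apply: (le_trans (Mp_le eM (fst_cnt pn2))); rewrite H_fst Hz.
  have E1 : minn p n = n by clear -pn1; lia.
  have E2 : minn (p - n) n = (p - n)%N by clear -pn2; lia.
  by rewrite E1 E2; apply: B1.
apply: (@Gamma_ge R n eps h (fstc n n) (fstc n (n + n))).
  rewrite H_fstn H_fstnn.
  have n2' : (2%:R : R) <= n%:R by rewrite ler_nat.
  have : 0 < n%:R * (eps + h) by apply: mulr_gt0; lra.
  rewrite /F; nra.
apply: (@stab_ge R n eps h (fstc n n) (n + m)%N).
  move=> e lt; have fc : cnt (fstc n n) = n by apply: fst_cnt; apply: leq_addr.
  rewrite fc leq_addr /= leqNgt; apply/negP => ce.
  move: lt; rewrite H_fstn.
  case: (leqP (cnt e) n) => cen.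
    have := H_lowerL h e e1; have := B2 _ cen; lra.
  have ce' : (cnt e - n < m)%N by clear -ce cen; lia.
  have := H_lowerK h e e0'; have := B3 _ ce'.
  rewrite natrB; last exact: ltnW.
  lra.
move=> z cz; have := KE z cz; rewrite H_fstn -GE; lra.
Qed.


Theorem proposition5p5 (R : realType) (n : nat) (eps h : R) :
  (2 <= n)%N -> 0 < h -> h <= 1 -> -1 <= eps -> eps <= 1 ->
  (* (a) *)
  ((0 <= eps ->
    let p1 : nat := if odd n then (if h <= eps then n.+1./2 else n./2) else n./2 in
    let G1 : R :=
      if ~~ odd n then (n%:R ^+ 2) / 2 + n%:R * (eps - h)
      else if h <= eps then (n%:R ^+ 2 - 1) / 2 + n.+1%:R * (eps - h)
      else (n%:R ^+ 2 - 1) / 2 + n.-1%:R * (eps - h) in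
    (forall z : config n, z \in Cset n p1 0 0 :|: Cset n 0 p1 0 ->
       (exists2 p : nat, (p <= n + n)%N & z \in @Mp R n eps h p) /\
       (forall (p : nat) (e : config n), (p <= n + n)%N -> e \in @Mp R n eps h p ->
          H eps h e <= H eps h z)) /\
    ((G1%:E <= @Gamma_m R n eps h)%E))
  /\
  (* (b) *)
   (0 < - eps -> - eps < h ->
    let p2 : nat := (3 * n)./2 in
    let G2 : R :=
      if ~~ odd n then (n%:R ^+ 2) / 2 - n%:R * (eps + h)
      else (n%:R ^+ 2 - 1) / 2 - n.-1%:R * (eps + h) in
    (forall z : config n,
       z \in Cset n n (p2 - n) (p2 - n) :|: Cset n (p2 - n) n (p2 - n) ->
       (exists2 p : nat, (n <= p <= n + n)%N & z \in @Mp R n eps h p) /\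
       (forall (p : nat) (e : config n), (n <= p <= n + n)%N -> e \in @Mp R n eps h p ->
          H eps h e <= H eps h z)) /\
    ((G2%:E <= @Gamma_m R n eps h)%E))).
Proof.
Proof.
move=> n2 h0 h1 em1 e1; split.
  exact: partA n2 h0 h1 em1 e1.
exact: partB n2 h0 h1 em1 e1.
Qed.
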